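(* Let $k\ge1$ and $n\ge2k+1$. In $U_q(\mathfrak{sl}_2)^{\otimes n}$, the element $\Lambda_{\{1,3,5,\dots,2k-1\}}$ commutes with $\Lambda_{[1;2k]}$ and with $\Lambda_{[1;2k-1]}$, and the element $\Lambda_{\{2,4,6,\dots,2k\}}$ commutes with $\Lambda_{[1;2k]}$ and with $\Lambda_{[1;2k+1]}$.
   Context: Let $\mathbb{K}$ be a field and $q\in\mathbb{K}$ not a root of unity. $U_q(\mathfrak{sl}_2)$ is the associative $\mathbb{K}$-algebra with generators $E,F,K,K^{-1}$ and relations $KK^{-1}=K^{-1}K=1$, $KE=q^2EK$, $KF=q^{-2}FK$, $EF-FE=\frac{K-K^{-1}}{q-q^{-1}}$, with Casimir element $\Lambda=(q-q^{-1})^2EF+q^{-1}K+qK^{-1}$ and coproduct $\Delta(E)=E\otimes1+K\otimes E$, $\Delta(F)=F\otimes K^{-1}+1\otimes F$, $\Delta(K^{\pm1})=K^{\pm1}\otimes K^{\pm1}$. $\mathcal{I}_R$ is the subalgebra generated by $EK^{-1},F,K^{-1},\Lambda$, with algebra morphism $\tau_R:\mathcal{I}_R\to U_q(\mathfrak{sl}_2)\otimes\mathcal{I}_R$: $\tau_R(EK^{-1})=K^{-1}\otimes EK^{-1}$, $\tau_R(F)=K\otimes F-q^{-3}(q-q^{-1})^2F^2K\otimes EK^{-1}+q^{-1}(q+q^{-1})FK\otimes K^{-1}-q^{-1}FK\otimes\Lambda$, $\tau_R(K^{-1})=1\otimes K^{-1}-q^{-1}(q-q^{-1})^2F\otimes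 EK^{-1}$, $\tau_R(\Lambda)=1\otimes\Lambda$. $[i;j]=\{i,\dots,j\}$; $1^{\otimes\ell}\otimes\varphi\otimes1^{\otimes m}$ applies $\varphi$ to tensor position $\ell+1$. For $A=\{a_1<\dots<a_m\}\subseteq[1;n]$, $\Lambda_A=1^{\otimes(a_1-1)}\otimes(\mu_m\circ\cdots\circ\mu_2)(\Lambda)\otimes1^{\otimes(n-a_m)}$ with $\mu_i=(1^{\otimes(a_i-a_1-1)}\otimes\tau_R)\circ\cdots\circ(1^{\otimes(a_{i-1}-a_1+1)}\otimes\tau_R)\circ(1^{\otimes(a_{i-1}-a_1)}\otimes\Delta)$ (no $\tau_R$ factors when $a_i=a_{i-1}+1$). *)

(* Defs.v *)
From HB Require Import structures.
From mathcomp Require Import all_boot all_order all_algebra.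
Set Implicit Arguments. Unset Strict Implicit. Unset Printing Implicit Defensive.
Import GRing.Theory.
Local Open Scope ring_scope.

Inductive genU := gE | gF | gK | gKi.

(* Generators of I_R: EK^{-1}, F, K^{-1}, Lambda. *)
Inductive genI := iEKi | iF | iKi | iL.

(* Formal non-commutative polynomial expressions over a field with
   generators in G (elements of the free K-algebra on G). *)
Inductive term (K : Type) (G : Type) :=
| tgen of G
| tcst of K
| tadd of term K G & term K G
| tmul of term K G & term K G.
Arguments tgen {K G}. Arguments tcst {K G}.
Arguments tadd {K G}. Arguments tmul {K G}.

Section Defs.
Variables (K : fieldType) (q : K).

Fixpoint teval (G : Type) (A : algType K) (v : G -> A) (t : term K G) : A :=
  match t with
  | tgen g => v g
  | tcst c => c%:A
  | tadd t1 t2 => teval v t1 + teval v t2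
  | tmul t1 t2 => teval v t1 * teval v t2
  end.

Fixpoint tsubst (G H : Type) (s : G -> term K H) (t : term K G) : term K H :=
  match t with
  | tgen g => s g
  | tcst c => tcst c
  | tadd t1 t2 => tadd (tsubst s t1) (tsubst s t2)
  | tmul t1 t2 => tmul (tsubst s t1) (tsubst s t2)
  end.

(* Generators of U_q(sl_2)^{(x) n}: (i, g) is the generator g in tensor
   position i (positions are numbered 1..n as in the paper). *)
Definition termU := term K (nat * genU).

Definition Uq_rels (n : nat) (A : algType K) (v : nat * genU -> A) : Prop :=
  (forall i, (1 <= i <= n)%N ->
     [/\ v (i, gK) * v (i, gKi) = 1,
         v (i, gKi) * v (i, gK) = 1,
         v (i, gK) * v (i, gE) = q ^+ 2 *: (v (i, gE) * v (i, gK)),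
         v (i, gK) * v (i, gF) = q ^- 2 *: (v (i, gF) * v (i, gK)) &
         v (i, gE) * v (i, gF) - v (i, gF) * v (i, gE)
           = (q - q^-1)^-1 *: (v (i, gK) - v (i, gKi))]) /\
  (forall i j g h, (1 <= i <= n)%N -> (1 <= j <= n)%N -> i != j ->
     v (i, g) * v (j, h) = v (j, h) * v (i, g)).

(* Equality in U_q(sl_2)^{(x) n} (= the free algebra modulo the ideal of
   the relations): two expressions are equal iff they agree under every
   relation-respecting evaluation in every K-algebra. *)
Definition Ueq (n : nat) (t1 t2 : termU) : Prop :=
  forall (A : algType K) (v : nat * genU -> A),
    Uq_rels n v -> teval v t1 = teval v t2.

(* Expressions in U^{(x) (p-1)} (x) I_R: U-generators in positions < p and
   I_R-generators in the last position p. *)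
Definition termM := term K ((nat * genU) + genI).

Definition uG (i : nat) (g : genU) : termM := tgen (inl (i, g)).
Definition iG (g : genI) : termM := tgen (inr g).
Definition uGU (i : nat) (g : genU) : termU := tgen (i, g).

Local Infix "+t" := tadd (at level 50, left associativity).
Local Infix "*t" := tmul (at level 40, left associativity).

Definition casimirAt (p : nat) : termU :=
  (tcst ((q - q^-1) ^+ 2) *t uGU p gE *t uGU p gF
   +t tcst (q^-1) *t uGU p gK +t tcst q *t uGU p gKi).

(* Embedding U^{(x)(p-1)} (x) I_R -> U^{(x) p}: I_R generators placed in
   position p. *)
Definition embed (p : nat) : termM -> termU :=
  tsubst (fun x => match x with
    | inl ig => tgen ig
    | inr iEKi => (uGU p gE *t uGU p gKi)
    | inr iF => uGU p gF
    | inr iKi => uGU p gKi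
    | inr iL => casimirAt p
    end).

(* 1^{(x)(p-1)} (x) Delta on the last factor (which lies in I_R, a left
   coideal: Delta(I_R) in U (x) I_R).  U-factor goes to position p, the
   I_R-factor becomes the new last position p+1.  The images are Delta of
   the generators of I_R, computed from Delta(E),Delta(F),Delta(K^{+-1}):
     Delta(EK^-1) = EK^-1 (x) K^-1 + 1 (x) EK^-1
     Delta(F)     = F (x) K^-1 + 1 (x) F
     Delta(K^-1)  = K^-1 (x) K^-1
     Delta(Lambda)= (q-q^-1)^2 (EF (x) K^-1 + E (x) F + KF (x) EK^-1)
                    + K (x) Lambda - q K (x) K^-1 + q K^-1 (x) K^-1  *)
Definition deltaM (p : nat) : termM -> termM :=
  tsubst (fun x => match x with
    | inl ig => tgen (inl ig)
    | inr iEKi => (uG p gE *t uG p gKi *t iG iKi +t iG iEKi)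
    | inr iF => (uG p gF *t iG iKi +t iG iF)
    | inr iKi => (uG p gKi *t iG iKi)
    | inr iL =>
        (tcst ((q - q^-1) ^+ 2) *t
           (uG p gE *t uG p gF *t iG iKi +t uG p gE *t iG iF
            +t uG p gK *t uG p gF *t iG iEKi)
         +t uG p gK *t iG iL +t tcst (- q) *t uG p gK *t iG iKi
         +t tcst q *t uG p gKi *t iG iKi)
    end).

(* 1^{(x)(p-1)} (x) tau_R on the last factor (position p); the
   U-factor stays in position p, the I_R-factor becomes position p+1. *)
Definition tauM (p : nat) : termM -> termM :=
  tsubst (fun x => match x with
    | inl ig => tgen (inl ig)
    | inr iEKi => (uG p gKi *t iG iEKi)
    | inr iF =>
        (uG p gK *t iG iF
         +t tcst (- (q ^- 3 * (q - q^-1) ^+ 2))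
             *t uG p gF *t uG p gF *t uG p gK *t iG iEKi
         +t tcst (q^-1 * (q + q^-1)) *t uG p gF *t uG p gK *t iG iKi
         +t tcst (- q^-1) *t uG p gF *t uG p gK *t iG iL)
    | inr iKi => (iG iKi +t tcst (- (q^-1 * (q - q^-1) ^+ 2)) *t uG p gF *t iG iEKi)
    | inr iL => iG iL
    end).

Fixpoint iter_tau (s m : nat) (w : termM) : termM :=
  match m with
  | 0 => w
  | m'.+1 => iter_tau s.+1 m' (tauM s w)
  end.

(* p = current last position (= a_{i-1}); the next element a of A gives
   mu_i: Delta at position p, then tau_R at positions p+1, ..., a-1. *)
Fixpoint buildLambda (p : nat) (w : termM) (rest : seq nat) : termU :=
  match rest with
  | [::] => embed p w
  | a :: rest' => buildLambda a (iter_tau p.+1 (a - p.+1) (deltaM p w)) rest'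
  end.

(* Lambda_A for A = {a_1 < ... < a_m} given as an increasing list;
   positions outside [a_1; a_m] carry 1 (implicitly: no generator). *)
Definition LambdaA (A : seq nat) : termU :=
  match A with
  | [::] => tcst 1
  | a1 :: rest => buildLambda a1 (iG iL) rest
  end.

End Defs.

Definition iseg (i j : nat) : seq nat := iota i (j.+1 - i).
Definition odds_upto (k : nat) : seq nat := [seq (2 * i).+1 | i <- iota 0 k].
Definition evens_upto (k : nat) : seq nat := [seq (2 * i).+2 | i <- iota 0 k].

(* Main.v *)
Require Import Defs.
From mathcomp Require Import all_boot all_order all_algebra.
From mathcomp Require Import ring zify.
Import GRing.Theory.
Local Open Scope ring_scope.

Section NC.
Variables (K : fieldType) (A : algType K).

Inductive nexpr :=
| NAtom of nat | NOne | NZero | NScale of K & nexpr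
| NAdd of nexpr & nexpr | NMul of nexpr & nexpr | NOpp of nexpr.

Fixpoint neval (env : seq A) (e : nexpr) : A :=
  match e with
  | NAtom i => nth 0 env i
  | NOne => 1
  | NZero => 0
  | NScale c e => c *: neval env e
  | NAdd e1 e2 => neval env e1 + neval env e2
  | NMul e1 e2 => neval env e1 * neval env e2
  | NOpp e => - neval env e
  end.

Definition nf := seq (K * seq nat).

Fixpoint evw (env : seq A) (w : seq nat) : A :=
  match w with [::] => 1 | i :: w' => nth 0 env i * evw env w' end.
Fixpoint evnf (env : seq A) (l : nf) : A :=
  match l with [::] => 0 | cw :: l' => cw.1 *: evw env cw.2 + evnf env l' end.

Fixpoint nf_app (l1 l2 : nf) : nf :=
  match l1 with [::] => l2 | x :: l => x :: nf_app l l2 end.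
Fixpoint wapp (w1 w2 : seq nat) : seq nat :=
  match w1 with [::] => w2 | x :: l => x :: wapp l w2 end.
Fixpoint nf_scale (c : K) (l : nf) : nf :=
  match l with [::] => [::] | cw :: l' => (c * cw.1, cw.2) :: nf_scale c l' end.
Fixpoint nf_mul1 (c : K) (w : seq nat) (l : nf) : nf :=
  match l with [::] => [::] | cw :: l' => (c * cw.1, wapp w cw.2) :: nf_mul1 c w l' end.
Fixpoint nf_mul (l1 l2 : nf) : nf :=
  match l1 with [::] => [::] | cw :: l' => nf_app (nf_mul1 cw.1 cw.2 l2) (nf_mul l' l2) end.

Fixpoint nnorm (e : nexpr) : nf :=
  match e with
  | NAtom i => [:: (1, [:: i])]
  | NOne => [:: (1, [::])]
  | NZero => [::]
  | NScale c e => nf_scale c (nnorm e)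
  | NAdd e1 e2 => nf_app (nnorm e1) (nnorm e2)
  | NMul e1 e2 => nf_mul (nnorm e1) (nnorm e2)
  | NOpp e => nf_scale (-1) (nnorm e)
  end.

Lemma evw_app env w1 w2 : evw env (wapp w1 w2) = evw env w1 * evw env w2.
Proof. by elim: w1 => [|i w IH] /=; rewrite ?mul1r // IH mulrA. Qed.
Lemma evnf_app env l1 l2 : evnf env (nf_app l1 l2) = evnf env l1 + evnf env l2.
Proof. by elim: l1 => [|x l IH] /=; rewrite ?add0r // IH addrA. Qed.
Lemma evnf_scale env c l : evnf env (nf_scale c l) = c *: evnf env l.
Proof. by elim: l => [|x l IH] /=; rewrite ?scaler0 // IH scalerDr scalerA. Qed.
Lemma evnf_mul1 env c w l : evnf env (nf_mul1 c w l) = c *: (evw env w * evnf env l).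
Proof.
elim: l => [|x l IH] /=; first by rewrite mulr0 scaler0.
by rewrite IH evw_app mulrDr scalerDr -scalerA scalerAr.
Qed.
Lemma evnf_mul env l1 l2 : evnf env (nf_mul l1 l2) = evnf env l1 * evnf env l2.
Proof.
elim: l1 => [|x l IH] /=; first by rewrite mul0r.
by rewrite evnf_app evnf_mul1 IH mulrDl scalerAl.
Qed.
Lemma norm_sound env e : evnf env (nnorm e) = neval env e.
Proof.
elim: e => [i|||c e IH|e1 IH1 e2 IH2|e1 IH1 e2 IH2|e IH] /=.
- by rewrite mulr1 scale1r addr0.
- by rewrite scale1r addr0.
- by [].
- by rewrite evnf_scale IH.
- by rewrite evnf_app IH1 IH2.
- by rewrite evnf_mul IH1 IH2.
- by rewrite evnf_scale IH scaleN1r.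
Qed.

Definition rule := (nat * nat * nf)%type.
Fixpoint find_rule (i j : nat) (rs : seq rule) : option nf :=
  match rs with
  | [::] => None
  | r :: rs' => if Nat.eqb r.1.1 i && Nat.eqb r.1.2 j then Some r.2 else find_rule i j rs'
  end.
Fixpoint rules_ok (env : seq A) (rs : seq rule) : Prop :=
  match rs with
  | [::] => True
  | r :: rs' => nth 0 env r.1.1 * nth 0 env r.1.2 = evnf env r.2 /\ rules_ok env rs'
  end.
Lemma find_rule_ok env rs i j r : rules_ok env rs -> find_rule i j rs = Some r ->
  nth 0 env i * nth 0 env j = evnf env r.
Proof.
elim: rs => [|r0 rs IH] //= [H1 H2].
case E: (Nat.eqb r0.1.1 i && Nat.eqb r0.1.2 j); last exact: IH.
move: E => /andP [/PeanoNat.Nat.eqb_eq E1 /PeanoNat.Nat.eqb_eq E2] [<-].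
by rewrite -E1 -E2.
Qed.

Fixpoint rw_word (rs : seq rule) (w : seq nat) : option nf :=
  match w with
  | i :: ((j :: t) as w') =>
      match find_rule i j rs with
      | Some r => Some (nf_mul r [:: (1, t)])
      | None => match rw_word rs w' with
                | Some r => Some (nf_mul1 1 [:: i] r)
                | None => None end
      end
  | _ => None
  end.
Lemma rw_word_cons rs i j t : rw_word rs [:: i, j & t] =
  match find_rule i j rs with
  | Some r => Some (nf_mul r [:: (1, t)])
  | None => match rw_word rs (j :: t) with
            | Some r => Some (nf_mul1 1 [:: i] r)
            | None => None end
  end.
Proof. by []. Qed.
Lemma rw_word_ok env rs w r : rules_ok env rs -> rw_word rs w = Some r -> evw env w = evnf env r.
Proof.
move=> Hr; elim: w r => [|i [|j t] IH] r //.
rewrite rw_word_cons.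
case E: (find_rule i j rs) => [r'|].
  move=> [<-]; rewrite evnf_mul /= scale1r addr0 mulrA (find_rule_ok _ _ _ _ _ Hr E) //.
case E2: (rw_word rs (j :: t)) => [r'|] //.
move=> [<-]; rewrite evnf_mul1 scale1r -(IH _ E2) /= mulr1 //.
Qed.

Fixpoint pass (rs : seq rule) (l : nf) : nf :=
  match l with
  | [::] => [::]
  | cw :: l' => match rw_word rs cw.2 with
                | Some r => nf_app (nf_scale cw.1 r) (pass rs l')
                | None => cw :: pass rs l'
                end
  end.
Lemma pass_ok env rs l : rules_ok env rs -> evnf env (pass rs l) = evnf env l.
Proof.
move=> Hr; elim: l => [|[c w] l IH] //=.
case E: (rw_word rs w) => [r|] /=; last by rewrite IH.
by rewrite evnf_app evnf_scale IH (rw_word_ok _ _ _ _ Hr E).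
Qed.

Fixpoint weq (w1 w2 : seq nat) : bool :=
  match w1, w2 with
  | [::], [::] => true
  | i :: w1', j :: w2' => Nat.eqb i j && weq w1' w2'
  | _, _ => false
  end.
Lemma weqP w1 w2 : weq w1 w2 -> w1 = w2.
Proof.
elim: w1 w2 => [|i w1 IH] [|j w2] //=.
by case: (PeanoNat.Nat.eqb_spec i j) => //= -> /IH ->.
Qed.
Fixpoint ninsert (c : K) (w : seq nat) (l : nf) : nf :=
  match l with
  | [::] => [:: (c, w)]
  | cw :: l' => if weq w cw.2 then (c + cw.1, cw.2) :: l' else cw :: ninsert c w l'
  end.
Fixpoint collect (l : nf) : nf :=
  match l with [::] => [::] | cw :: l' => ninsert cw.1 cw.2 (collect l') end.
Lemma insert_ok env c w l : evnf env (ninsert c w l) = c *: evw env w + evnf env l.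
Proof.
elim: l => [|[c' w'] l IH] /=; first by [].
case E: (weq w w') => /=.
  by rewrite (weqP _ _ E) scalerDl addrA.
by rewrite IH addrCA.
Qed.
Lemma collect_ok env l : evnf env (collect l) = evnf env l.
Proof. by elim: l => [|[c w] l IH] //=; rewrite insert_ok IH. Qed.

Fixpoint iter_pass (n : nat) (rs : seq rule) (l : nf) : nf :=
  match n with 0 => l | n'.+1 => iter_pass n' rs (collect (pass rs l)) end.
Lemma iter_pass_ok env n rs l : rules_ok env rs -> evnf env (iter_pass n rs l) = evnf env l.
Proof.
move=> Hr; elim: n l => [|n IH] l //=.
by rewrite IH collect_ok pass_ok.
Qed.

Fixpoint all_zero (l : nf) : Prop :=
  match l with [::] => True | cw :: l' => cw.1 = 0 /\ all_zero l' end.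
Lemma all_zero_ok env l : all_zero l -> evnf env l = 0.
Proof. by elim: l => [|[c w] l IH] //= [-> /IH ->]; rewrite scale0r add0r. Qed.

Lemma nc_check env rs n e1 e2 : rules_ok env rs ->
  all_zero (iter_pass n rs (collect (nnorm (NAdd e1 (NOpp e2))))) ->
  neval env e1 = neval env e2.
Proof.
move=> Hr /(all_zero_ok env); rewrite iter_pass_ok // collect_ok norm_sound /=.
by move/eqP; rewrite subr_eq0 => /eqP.
Qed.
End NC.

Ltac find_idx x l :=
  lazymatch l with
  | x :: _ => constr:(0%N)
  | _ :: ?l' => let n := find_idx x l' in constr:(S n)
  end.

Ltac reify K env t :=
  lazymatch t with
  | @GRing.add _ ?x ?y => let r1 := reify K env x in let r2 := reify K env y in constr:(@NAdd K r1 r2)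
  | @GRing.mul _ ?x ?y => let r1 := reify K env x in let r2 := reify K env y in constr:(@NMul K r1 r2)
  | @GRing.opp _ ?x => let r1 := reify K env x in constr:(@NOpp K r1)
  | @GRing.scale _ _ ?c ?x => let r1 := reify K env x in constr:(@NScale K c r1)
  | @GRing.one _ => constr:(@NOne K)
  | @GRing.zero _ => constr:(@NZero K)
  | _ => let i := find_idx t env in constr:(@NAtom K i)
  end.

Ltac nc_solve K A env rs n :=
  lazymatch goal with
  | |- ?l = ?r =>
    let e1 := reify K env l in let e2 := reify K env r in
    change (@neval K A env e1 = @neval K A env e2);
    apply: (@nc_check K A env rs n e1 e2)
  end.

Definition rulesS (K : fieldType) (q : K) : seq (rule K) := [:: (6%N, 0%N, [:: (q ^- 2, [:: 0%N; 6%N])]);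
  (6%N, 1%N, [:: (q ^+ 2, [:: 1%N; 6%N])]);
  (6%N, 2%N, [:: (1, [:: 2%N; 6%N])]);
  (6%N, 3%N, [:: (1, [:: 3%N; 6%N])]);
  (4%N, 0%N, [:: (1, [:: 0%N; 4%N]); (-(1-q ^- 2), [:: 2%N; 6%N])]);
  (4%N, 1%N, [:: (1, [:: 1%N; 4%N])]);
  (4%N, 2%N, [:: (1, [:: 2%N; 4%N]); (((q*q+1)*(q-q^-1)^-1), [:: 1%N; 6%N])]);
  (4%N, 3%N, [:: (1, [:: 3%N; 4%N]); (-(q*(q-q^-1)^-1), [:: 1%N; 6%N])]);
  (5%N, 0%N, [:: (q ^+ 2, [:: 0%N; 5%N])]);
  (5%N, 1%N, [:: (q ^- 2, [:: 1%N; 5%N]); (-(q ^- 2*(1-q ^+ 2)), [:: 2%N])]);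
  (5%N, 2%N, [:: (1, [:: 2%N; 5%N]); (-((q*q+1)*(q-q^-1)^-1), [:: 0%N])]);
  (5%N, 3%N, [:: (1, [:: 3%N; 5%N]); ((q*(q-q^-1)^-1), [:: 0%N])]);
  (8%N, 0%N, [:: (1, [:: 0%N; 8%N])]);
  (8%N, 1%N, [:: (1, [:: 1%N; 8%N])]);
  (8%N, 2%N, [:: (1, [:: 2%N; 8%N])]);
  (8%N, 3%N, [:: (1, [:: 3%N; 8%N])]);
  (8%N, 4%N, [:: (1, [:: 4%N; 8%N])]);
  (8%N, 5%N, [:: (1, [:: 5%N; 8%N])]);
  (8%N, 6%N, [:: (1, [:: 6%N; 8%N])]);
  (8%N, 7%N, [:: (1, [:: 7%N; 8%N])]);
  (9%N, 0%N, [:: (1, [:: 0%N; 9%N])]);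
  (9%N, 1%N, [:: (1, [:: 1%N; 9%N])]);
  (9%N, 2%N, [:: (1, [:: 2%N; 9%N])]);
  (9%N, 3%N, [:: (1, [:: 3%N; 9%N])]);
  (9%N, 4%N, [:: (1, [:: 4%N; 9%N])]);
  (9%N, 5%N, [:: (1, [:: 5%N; 9%N])]);
  (9%N, 6%N, [:: (1, [:: 6%N; 9%N])]);
  (9%N, 7%N, [:: (1, [:: 7%N; 9%N])]);
  (10%N, 0%N, [:: (1, [:: 0%N; 10%N])]);
  (10%N, 1%N, [:: (1, [:: 1%N; 10%N])]);
  (10%N, 2%N, [:: (1, [:: 2%N; 10%N])]);
  (10%N, 3%N, [:: (1, [:: 3%N; 10%N])]);
  (10%N, 4%N, [:: (1, [:: 4%N; 10%N])]);
  (10%N, 5%N, [:: (1, [:: 5%N; 10%N])]);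
  (10%N, 6%N, [:: (1, [:: 6%N; 10%N])]);
  (10%N, 7%N, [:: (1, [:: 7%N; 10%N])]);
  (11%N, 0%N, [:: (1, [:: 0%N; 11%N])]);
  (11%N, 1%N, [:: (1, [:: 1%N; 11%N])]);
  (11%N, 2%N, [:: (1, [:: 2%N; 11%N])]);
  (11%N, 3%N, [:: (1, [:: 3%N; 11%N])]);
  (11%N, 4%N, [:: (1, [:: 4%N; 11%N])]);
  (11%N, 5%N, [:: (1, [:: 5%N; 11%N])]);
  (11%N, 6%N, [:: (1, [:: 6%N; 11%N])]);
  (11%N, 7%N, [:: (1, [:: 7%N; 11%N])]);
  (9%N, 8%N, [:: (1, [:: 8%N; 9%N]); (-(q-q^-1)^-1, [:: 10%N]); ((q-q^-1)^-1, [:: 11%N])]);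
  (10%N, 8%N, [:: (q ^+ 2, [:: 8%N; 10%N])]);
  (11%N, 8%N, [:: (q ^- 2, [:: 8%N; 11%N])]);
  (10%N, 9%N, [:: (q ^- 2, [:: 9%N; 10%N])]);
  (11%N, 9%N, [:: (q ^+ 2, [:: 9%N; 11%N])]);
  (10%N, 11%N, [:: (1, [:: ])]);
  (11%N, 10%N, [:: (1, [:: ])])].

Definition rulesD (K : fieldType) (q : K) : seq (rule K) := [:: (4%N, 0%N, [:: (1, [:: 0%N; 4%N])]);
  (4%N, 1%N, [:: (1, [:: 1%N; 4%N])]);
  (4%N, 2%N, [:: (1, [:: 2%N; 4%N])]);
  (4%N, 3%N, [:: (1, [:: 3%N; 4%N])]);
  (5%N, 0%N, [:: (1, [:: 0%N; 5%N])]);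
  (5%N, 1%N, [:: (1, [:: 1%N; 5%N])]);
  (5%N, 2%N, [:: (1, [:: 2%N; 5%N])]);
  (5%N, 3%N, [:: (1, [:: 3%N; 5%N])]);
  (6%N, 0%N, [:: (1, [:: 0%N; 6%N])]);
  (6%N, 1%N, [:: (1, [:: 1%N; 6%N])]);
  (6%N, 2%N, [:: (1, [:: 2%N; 6%N])]);
  (6%N, 3%N, [:: (1, [:: 3%N; 6%N])]);
  (7%N, 0%N, [:: (1, [:: 0%N; 7%N])]);
  (7%N, 1%N, [:: (1, [:: 1%N; 7%N])]);
  (7%N, 2%N, [:: (1, [:: 2%N; 7%N])]);
  (7%N, 3%N, [:: (1, [:: 3%N; 7%N])]);
  (5%N, 4%N, [:: (1, [:: 4%N; 5%N]); (-(q-q^-1)^-1, [:: 6%N]); ((q-q^-1)^-1, [:: 7%N])]);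
  (6%N, 4%N, [:: (q ^+ 2, [:: 4%N; 6%N])]);
  (7%N, 4%N, [:: (q ^- 2, [:: 4%N; 7%N])]);
  (6%N, 5%N, [:: (q ^- 2, [:: 5%N; 6%N])]);
  (7%N, 5%N, [:: (q ^+ 2, [:: 5%N; 7%N])]);
  (6%N, 7%N, [:: (1, [:: ])]);
  (7%N, 6%N, [:: (1, [:: ])])].

Ltac nc_compute :=
  lazy beta iota zeta delta [all_zero iter_pass collect ninsert weq pass rw_word find_rule
    nf_mul nf_mul1 nf_scale nf_app wapp nnorm Nat.eqb andb fst snd rulesS rulesD];
  repeat split.

Section Steps.
Variables (K : fieldType) (q : K) (A : algType K).
Hypothesis hq0 : q != 0.
Hypothesis hq2 : q * q - 1 != 0.

Definition conds (a b c d E F Kp : A) : Prop :=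
 [/\ [/\ Kp*a = q ^- 2 *: (a*Kp), Kp*b = q ^+ 2 *: (b*Kp), Kp*c = c*Kp & Kp*d = d*Kp],
  [/\ E*a = a*E - (1 - q ^- 2) *: (c*Kp), E*b = b*E,
      E*c = c*E + ((q*q+1)*(q-q^-1)^-1) *: (b*Kp) & E*d = d*E - (q*(q-q^-1)^-1) *: (b*Kp)] &
  [/\ F*a = q ^+ 2 *: (a*F), F*b = q ^- 2 *: (b*F - (1 - q ^+ 2) *: c),
      F*c = c*F - ((q*q+1)*(q-q^-1)^-1) *: a & F*d = d*F + (q*(q-q^-1)^-1) *: a]].

Definition onesite (e f k ki : A) : Prop :=
  [/\ k * ki = 1, ki * k = 1, k * e = q ^+ 2 *: (e * k), k * f = q ^- 2 *: (f * k) &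
      e * f - f * e = (q - q^-1)^-1 *: (k - ki)].

Fixpoint comml (x : A) (l : seq A) : Prop :=
  match l with [::] => True | y :: l' => x * y = y * x /\ comml x l' end.
Fixpoint commall (l1 l2 : seq A) : Prop :=
  match l1 with [::] => True | x :: l' => comml x l2 /\ commall l' l2 end.
Ltac destr_all := repeat match goal with H : _ /\ _ |- _ => destruct H end;
  repeat match goal with H : True |- _ => clear H end.

Lemma onesite_der (e f k ki : A) : onesite e f k ki ->
  [/\ f * e = e * f - (q - q^-1)^-1 *: (k - ki), ki * e = q ^- 2 *: (e * ki) &
      ki * f = q ^+ 2 *: (f * ki)].
Proof.
move=> [h1 h2 h3 h4 h5]; split.
- by rewrite -h5 opprB addrC subrK.
- have ek : e * k = q ^- 2 *: (k * e).
    by rewrite h3 scalerA mulVf ?scale1r // expf_neq0.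
  rewrite -[ki * e]mulr1 -h1 (mulrA (ki * e)) -(mulrA ki e k) ek -scalerAr -scalerAl (mulrA ki k e) h2 mul1r //.
- have fk : f * k = q ^+ 2 *: (k * f).
    by rewrite h4 scalerA mulfV ?scale1r // expf_neq0.
  rewrite -[ki * f]mulr1 -h1 (mulrA (ki * f)) -(mulrA ki f k) fk -scalerAr -scalerAl (mulrA ki k f) h2 mul1r //.
Qed.

Ltac fieldq := field; rewrite ?hq0 ?hq2 //.

Ltac close_rule env :=
  match goal with
  | H : _ * _ = _ |- _ => rewrite [LHS]H;
      nc_solve K A env (@nil (rule K)) 0%N; nc_compute; fieldq
  end.

Definition Cas (e f k ki : A) := ((q - q^-1)^+2)%:A * e * f + (q^-1)%:A * k + q%:A * ki.
Definition Xv (a b c d e f k ki : A) := a * (e * ki) + b * f + c * ki + d * Cas e f k ki.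
Definition deltaA (a d f k : A) := a + d * (((q - q^-1)^+2)%:A * (k * f)).
Definition deltaB (b d e : A) := b + d * (((q - q^-1)^+2)%:A * e).
Definition deltaC (a b c d e f k ki : A) :=
  a * (e * ki) + b * f + c * ki + d * (((q - q^-1)^+2)%:A * (e * f) - q%:A * k + q%:A * ki).
Definition deltaD (d k : A) := d * k.
Definition tauA (a b c f k ki : A) :=
  a * ki + c * ((- (q^-1 * (q - q^-1) ^+ 2))%:A * f) + b * ((- (q ^- 3 * (q - q^-1) ^+ 2))%:A * (f * f * k)).
Definition tauB (b k : A) := b * k.
Definition tauC (b c f k : A) := c + b * ((q^-1 * (q + q^-1))%:A * (f * k)).
Definition tauD (b d f k : A) := d + b * ((- q^-1)%:A * (f * k)).

Definition hypS a b c d E F Kp Ki e f k ki :=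
  [/\ onesite e f k ki, conds a b c d E F Kp & commall [:: e; f; k; ki] [:: a; b; c; d; E; F; Kp; Ki]].

Lemma rules_okS a b c d E F Kp Ki e f k ki : hypS a b c d E F Kp Ki e f k ki ->
  @rules_ok K A [:: a; b; c; d; E; F; Kp; Ki; e; f; k; ki] (rulesS K q).
Proof.
move=> [[h1 h2 h3 h4 h5] [[hKa hKb hKc hKd] [hEa hEb hEc hEd] [hFa hFb hFc hFd]] hc].
simpl in hc; destr_all.
have [h6 h7 h8] := onesite_der _ _ _ _ (And5 h1 h2 h3 h4 h5).
simpl; repeat split; close_rule [:: a; b; c; d; E; F; Kp; Ki; e; f; k; ki].
Qed.

Ltac ncS a b c d E F Kp Ki e f k ki H :=
  nc_solve K A [:: a; b; c; d; E; F; Kp; Ki; e; f; k; ki] (rulesS K q) 40%N;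
  [ exact: (rules_okS a b c d E F Kp Ki e f k ki H) | nc_compute; fieldq ].

Lemma final_comm a b c d E F Kp Ki e f k ki : hypS a b c d E F Kp Ki e f k ki ->
  let X := Xv a b c d e f k ki in
  [/\ (E + Kp * e) * X = X * (E + Kp * e), (F * ki + f) * X = X * (F * ki + f) &
      (Kp * k) * X = X * (Kp * k)].
Proof.
move=> H X; rewrite /X /Xv /Cas; split.
- ncS a b c d E F Kp Ki e f k ki H.
- ncS a b c d E F Kp Ki e f k ki H.
- ncS a b c d E F Kp Ki e f k ki H.
Qed.

Lemma delta_conds a b c d E F Kp Ki e f k ki : hypS a b c d E F Kp Ki e f k ki ->
  conds (deltaA a d f k) (deltaB b d e) (deltaC a b c d e f k ki) (deltaD d k)
        (E + Kp * e) (F * ki + f) (Kp * k).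
Proof.
move=> H; rewrite /conds /deltaA /deltaB /deltaC /deltaD.
split; split; ncS a b c d E F Kp Ki e f k ki H.
Qed.

Lemma tau_conds a b c d E F Kp Ki e f k ki : hypS a b c d E F Kp Ki e f k ki ->
  conds (tauA a b c f k ki) (tauB b k) (tauC b c f k) (tauD b d f k)
        (E + Kp * e) (F * ki + f) (Kp * k).
Proof.
move=> H; rewrite /conds /tauA /tauB /tauC /tauD.
split; split; ncS a b c d E F Kp Ki e f k ki H.
Qed.

Definition isA (E F Kp Ki : A) := ((q - q^-1)^+2)%:A * (Kp * F).
Definition isB (E F Kp Ki : A) := ((q - q^-1)^+2)%:A * E.
Definition isC (E F Kp Ki : A) := ((q - q^-1)^+2)%:A * (E * F) - q%:A * Kp + q%:A * Ki.
Definition isD (E F Kp Ki : A) := Kp.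

Definition hypD E F Kp Ki e f k ki :=
  onesite e f k ki /\ commall [:: e; f; k; ki] [:: E; F; Kp; Ki].

Lemma rules_okD E F Kp Ki e f k ki : hypD E F Kp Ki e f k ki ->
  @rules_ok K A [:: E; F; Kp; Ki; e; f; k; ki] (rulesD K q).
Proof.
move=> [[h1 h2 h3 h4 h5] hc].
simpl in hc; destr_all.
have [h6 h7 h8] := onesite_der _ _ _ _ (And5 h1 h2 h3 h4 h5).
simpl; repeat split; close_rule [:: E; F; Kp; Ki; e; f; k; ki].
Qed.

Ltac ncD E F Kp Ki e f k ki H :=
  nc_solve K A [:: E; F; Kp; Ki; e; f; k; ki] (rulesD K q) 40%N;
  [ exact: (rules_okD E F Kp Ki e f k ki H) | nc_compute; fieldq ].

Lemma is_delta E F Kp Ki e f k ki : hypD E F Kp Ki e f k ki ->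
  let E2 := E + Kp * e in let F2 := F * ki + f in let K2 := Kp * k in let Ki2 := Ki * ki in
  [/\ deltaA (isA E F Kp Ki) (isD E F Kp Ki) f k = isA E2 F2 K2 Ki2,
      deltaB (isB E F Kp Ki) (isD E F Kp Ki) e = isB E2 F2 K2 Ki2,
      deltaC (isA E F Kp Ki) (isB E F Kp Ki) (isC E F Kp Ki) (isD E F Kp Ki) e f k ki = isC E2 F2 K2 Ki2,
      deltaD (isD E F Kp Ki) k = isD E2 F2 K2 Ki2 &
      Xv (isA E F Kp Ki) (isB E F Kp Ki) (isC E F Kp Ki) (isD E F Kp Ki) e f k ki = Cas E2 F2 K2 Ki2].
Proof.
move=> H E2 F2 K2 Ki2; rewrite /E2 /F2 /K2 /Ki2 /deltaA /deltaB /deltaC /deltaD /Xv /Cas /isA /isB /isC /isD.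
split; ncD E F Kp Ki e f k ki H.
Qed.
End Steps.
Arguments conds {K} q {A}. Arguments onesite {K} q {A}. Arguments Cas {K} q {A}.
Arguments Xv {K} q {A}. Arguments deltaA {K} q {A}. Arguments deltaB {K} q {A}.
Arguments deltaC {K} q {A}. Arguments deltaD {K A}. Arguments tauA {K} q {A}.
Arguments tauB {K A}. Arguments tauC {K} q {A}. Arguments tauD {K} q {A}.
Arguments isA {K} q {A}. Arguments isB {K} q {A}. Arguments isC {K} q {A}. Arguments isD {K A}.
Arguments hypS {K} q {A}. Arguments hypD {K} q {A}. Arguments commall {K A}. Arguments comml {K A}.

Section Glue.
Variables (K : fieldType) (q : K) (A : algType K) (n : nat) (v : nat * genU -> A).
Hypothesis hq0 : q != 0.
Hypothesis hq2 : q * q - 1 != 0.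
Hypothesis hrel : Uq_rels q n v.

Fixpoint dK r := match r with 0 => 1 | r'.+1 => dK r' * v (r, gK) end.
Fixpoint dKi r := match r with 0 => 1 | r'.+1 => dKi r' * v (r, gKi) end.
Fixpoint dE r := match r with 0 => 0 | r'.+1 => dE r' + dK r' * v (r, gE) end.
Fixpoint dF r := match r with 0 => 0 | r'.+1 => dF r' * v (r, gKi) + v (r, gF) end.

Definition cm (z x : A) := z * x = x * z.

Lemma cmD z x y : cm z x -> cm z y -> cm z (x + y).
Proof. by rewrite /cm mulrDr mulrDl => -> ->. Qed.
Lemma cmM z x y : cm z x -> cm z y -> cm z (x * y).
Proof. by rewrite /cm => hx hy; rewrite mulrA hx -mulrA hy mulrA. Qed.
Lemma cmN z x : cm z x -> cm z (- x).
Proof. by rewrite /cm mulrN mulNr => ->. Qed.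
Lemma cmZ z c x : cm z x -> cm z (c *: x).
Proof. by rewrite /cm -scalerAl -scalerAr => ->. Qed.
Lemma cm1 z : cm z 1. Proof. by rewrite /cm mulr1 mul1r. Qed.
Lemma cm0 z : cm z 0. Proof. by rewrite /cm mulr0 mul0r. Qed.

Ltac cm_solve := repeat first [ apply: cmD | apply: cmM | apply: cmN | apply: cmZ | apply: cm1 | apply: cm0 ].

Lemma pos_comm i j g h : (1 <= i <= n)%N -> (1 <= j <= n)%N -> i != j ->
  cm (v (i, g)) (v (j, h)).
Proof. by move=> hi hj hij; rewrite /cm (hrel.2 i j g h hi hj hij). Qed.

Lemma onesite_v i : (1 <= i <= n)%N ->
  onesite q (v (i, gE)) (v (i, gF)) (v (i, gK)) (v (i, gKi)).
Proof. by move=> hi; have [h1 h2 h3 h4 h5] := hrel.1 i hi; split. Qed.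

Lemma cm_diag r i g : (r < i <= n)%N ->
  [/\ cm (v (i, g)) (dE r), cm (v (i, g)) (dF r), cm (v (i, g)) (dK r) & cm (v (i, g)) (dKi r)].
Proof.
move=> /andP [hri hin].
have hi : (1 <= i <= n)%N by rewrite hin andbT; apply: leq_ltn_trans hri.
elim: r hri => [|r IH] hri /=; first by split; [apply: cm0|apply: cm0|apply: cm1|apply: cm1].
have [h1 h2 h3 h4] := IH (ltnW hri).
have hc : forall g', cm (v (i, g)) (v (r.+1, g')).
  move=> g'; apply: pos_comm => //; first by rewrite ltn0Sn /= ltnW // (leq_trans hri).
  by rewrite neq_ltn hri orbT.
by split; cm_solve => //.
Qed.

Lemma dKKi r : (r <= n)%N -> dK r * dKi r = 1 /\ dKi r * dK r = 1.
Proof.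
elim: r => [|r IH] hr /=; first by rewrite mulr1.
have [IH1 IH2] := IH (ltnW hr).
have hi : (1 <= r.+1 <= n)%N by rewrite hr.
have [h1 h2 _ _ _] := hrel.1 _ hi.
have hh : (r < r.+1 <= n)%N by rewrite ltnSn hr.
have [_ _ c1 c2] := cm_diag r r.+1 gK hh.
have [_ _ c3 c4] := cm_diag r r.+1 gKi hh.
split.
- by rewrite mulrA -(mulrA (dK r)) c2 mulrA IH1 mul1r h1.
- by rewrite mulrA -(mulrA (dKi r)) c3 mulrA IH2 mul1r h2.
Qed.

Definition Inv r (a b c d : A) :=
  (forall i g, (r < i <= n)%N ->
     [/\ cm (v (i, g)) a, cm (v (i, g)) b, cm (v (i, g)) c & cm (v (i, g)) d]) /\
  conds q a b c d (dE r) (dF r) (dK r).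

Lemma hypS_at r a b c d : (r < n)%N -> Inv r a b c d ->
  hypS q a b c d (dE r) (dF r) (dK r) (dKi r)
    (v (r.+1, gE)) (v (r.+1, gF)) (v (r.+1, gK)) (v (r.+1, gKi)).
Proof.
move=> hr [H1 H2].
have hh : (r < r.+1 <= n)%N by rewrite ltnSn hr.
split => //; first by apply: onesite_v; rewrite hr.
have [? ? ? ?] := H1 _ gE hh. have [? ? ? ?] := H1 _ gF hh.
have [? ? ? ?] := H1 _ gK hh. have [? ? ? ?] := H1 _ gKi hh.
have [? ? ? ?] := cm_diag r _ gE hh. have [? ? ? ?] := cm_diag r _ gF hh.
have [? ? ? ?] := cm_diag r _ gK hh. have [? ? ? ?] := cm_diag r _ gKi hh.
by rewrite /=; repeat split.
Qed.

Lemma Inv_delta r a b c d : (r < n)%N -> Inv r a b c d ->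
  let e := v (r.+1, gE) in let f := v (r.+1, gF) in let k := v (r.+1, gK) in let ki := v (r.+1, gKi) in
  Inv r.+1 (deltaA q a d f k) (deltaB q b d e) (deltaC q a b c d e f k ki) (deltaD d k).
Proof.
move=> hr H e f k ki; split.
- move=> i g hi.
  have hi' : (r < i <= n)%N by case/andP: hi => h1 ->; rewrite andbT ltnW.
  have [? ? ? ?] := H.1 i g hi'.
  have hp : forall g', cm (v (i, g)) (v (r.+1, g')).
    move=> g'; apply: pos_comm; first by case/andP: hi => h1 ->; rewrite andbT (leq_trans _ h1).
      by rewrite hr.
    by case/andP: hi => h1 _; rewrite neq_ltn h1 orbT.
  rewrite /deltaA /deltaB /deltaC /deltaD /e /f /k /ki.
  by split; cm_solve; rewrite ?hp.
- have HH := (@delta_conds K q A hq0 hq2 _ _ _ _ _ _ _ _ _ _ _ _ (hypS_at _ _ _ _ _ hr H)).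
  exact HH.
Qed.

Lemma Inv_tau r a b c d : (r < n)%N -> Inv r a b c d ->
  let e := v (r.+1, gE) in let f := v (r.+1, gF) in let k := v (r.+1, gK) in let ki := v (r.+1, gKi) in
  Inv r.+1 (tauA q a b c f k ki) (tauB b k) (tauC q b c f k) (tauD q b d f k).
Proof.
move=> hr H e f k ki; split.
- move=> i g hi.
  have hi' : (r < i <= n)%N by case/andP: hi => h1 ->; rewrite andbT ltnW.
  have [? ? ? ?] := H.1 i g hi'.
  have hp : forall g', cm (v (i, g)) (v (r.+1, g')).
    move=> g'; apply: pos_comm; first by case/andP: hi => h1 ->; rewrite andbT (leq_trans _ h1).
      by rewrite hr.
    by case/andP: hi => h1 _; rewrite neq_ltn h1 orbT.
  rewrite /tauA /tauB /tauC /tauD /e /f /k /ki.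
  by split; cm_solve; rewrite ?hp.
- exact (@tau_conds K q A hq0 hq2 _ _ _ _ _ _ _ _ _ _ _ _ (hypS_at _ _ _ _ _ hr H)).
Qed.

Definition sigv (y : genI -> A) : (nat * genU) + genI -> A :=
  fun x => match x with inl ig => v ig | inr g => y g end.
Definition LF (w : termM K) (a b c d : A) :=
  forall y, teval (sigv y) w = a * y iEKi + b * y iF + c * y iKi + d * y iL.

Lemma teval_subst (G H : Type) (u : H -> A) (s : G -> term K H) (w : term K G) :
  teval u (tsubst s w) = teval (fun x => teval u (s x)) w.
Proof. by elim: w => [g|c|t1 /= -> t2 ->|t1 /= -> t2 ->]. Qed.

Lemma teval_ext (G : Type) (u1 u2 : G -> A) (w : term K G) :
  (forall x, u1 x = u2 x) -> teval u1 w = teval u2 w.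
Proof. by move=> h; elim: w => [g|c|t1 /= -> t2 ->|t1 /= -> t2 ->] //=. Qed.

Lemma LF_subst (H : Type) (u : H -> A) s w a b c d : LF w a b c d ->
  (forall ig, teval u (s (inl ig)) = v ig) ->
  teval u (tsubst s w) = a * teval u (s (inr iEKi)) + b * teval u (s (inr iF))
     + c * teval u (s (inr iKi)) + d * teval u (s (inr iL)).
Proof.
move=> Hw Hs; rewrite teval_subst (teval_ext _ _ (sigv (fun g => teval u (s (inr g))))).
  exact: Hw.
by case.
Qed.

Lemma LF_delta p w a b c d : LF w a b c d ->
  let e := v (p, gE) in let f := v (p, gF) in let k := v (p, gK) in let ki := v (p, gKi) in
  LF (deltaM q p w) (deltaA q a d f k) (deltaB q b d e) (deltaC q a b c d e f k ki) (deltaD d k).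
Proof.
move=> Hw e f k ki y; rewrite /deltaM (LF_subst _ _ _ _ _ _ _ _ Hw) //=.
rewrite /deltaA /deltaB /deltaC /deltaD /e /f /k /ki.
nc_solve K A [:: a; b; c; d; v (p, gE); v (p, gF); v (p, gK); v (p, gKi); y iEKi; y iF; y iKi; y iL] (@nil (rule K)) 0%N.
all: try exact I.
nc_compute. all: field; rewrite ?hq0 ?hq2 //.
Qed.

Lemma LF_tau p w a b c d : LF w a b c d ->
  let e := v (p, gE) in let f := v (p, gF) in let k := v (p, gK) in let ki := v (p, gKi) in
  LF (tauM q p w) (tauA q a b c f k ki) (tauB b k) (tauC q b c f k) (tauD q b d f k).
Proof.
move=> Hw e f k ki y; rewrite /tauM (LF_subst _ _ _ _ _ _ _ _ Hw) //=.
rewrite /tauA /tauB /tauC /tauD /e /f /k /ki.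
nc_solve K A [:: a; b; c; d; v (p, gE); v (p, gF); v (p, gK); v (p, gKi); y iEKi; y iF; y iKi; y iL] (@nil (rule K)) 0%N.
all: try exact I.
nc_compute. all: field; rewrite ?hq0 ?hq2 //.
Qed.

Lemma LF_embed p w a b c d : LF w a b c d ->
  teval v (embed q p w) = Xv q a b c d (v (p, gE)) (v (p, gF)) (v (p, gK)) (v (p, gKi)).
Proof.
move=> Hw; rewrite /embed (LF_subst _ _ _ _ _ _ _ _ Hw) //=.
Qed.

Lemma iter_tau_ok m r w a b c d : (r + m <= n)%N -> Inv r a b c d -> LF w a b c d ->
  exists a' b' c' d', Inv (r + m) a' b' c' d' /\ LF (iter_tau q r.+1 m w) a' b' c' d'.
Proof.
elim: m r w a b c d => [|m IH] r w a b c d hm HI HL.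
  by exists a, b, c, d; rewrite addn0.
rewrite /= -addSnnS.
have hr : (r < n)%N by lia.
apply: (IH _ _ _ _ _ _ _ (Inv_tau r a b c d hr HI) (LF_tau r.+1 w a b c d HL)).
lia.
Qed.

Lemma cmC z x : cm z x -> cm x z. Proof. by rewrite /cm => ->. Qed.
Lemma cm_inv X Kx Kix : cm X Kx -> Kx * Kix = 1 -> Kix * Kx = 1 -> cm X Kix.
Proof.
rewrite /cm => h h1 h2.
rewrite -[X * Kix]mul1r -h2 mulrA -(mulrA Kix Kx X) -h (mulrA Kix X Kx) -mulrA h1 mulr1 //.
Qed.

Lemma final_ok r a b c d : Inv r a b c d -> (r < n)%N -> forall j, (r < j <= n)%N ->
  let X := Xv q a b c d (v (r.+1, gE)) (v (r.+1, gF)) (v (r.+1, gK)) (v (r.+1, gKi)) in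
  [/\ cm X (dE j), cm X (dF j), cm X (dK j) & cm X (dKi j)].
Proof.
move=> HI hr j hj X.
elim: j hj => [|j IH] //.
case: (ltngtP r j) => hrj hj.
- have hj' : (r < j <= n)%N by rewrite hrj (ltnW (proj2 (andP hj))).
  have [h1 h2 h3 h4] := IH hj'.
  have hv : forall g, cm X (v (j.+1, g)).
    move=> g; apply: cmC; rewrite /X /Xv /Cas.
    have hi : (r < j.+1 <= n)%N by move: hj hrj; clear; lia.
    have [? ? ? ?] := HI.1 _ g hi.
    have hp : forall g', cm (v (j.+1, g)) (v (r.+1, g')).
      move=> g'; apply: pos_comm; move: hj hrj; clear; lia.
    by cm_solve.
  by split; rewrite /=; cm_solve.
- by move: hj; rewrite ltnS leqNgt hrj.
- subst j.
  have [e1 e2 e3] := @final_comm K q A hq0 hq2 _ _ _ _ _ _ _ _ _ _ _ _ (hypS_at _ _ _ _ _ hr HI).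
  have hE : cm X (dE r.+1) by apply: esym; exact: e1.
  have hF : cm X (dF r.+1) by apply: esym; exact: e2.
  have hK : cm X (dK r.+1) by apply: esym; exact: e3.
  have [k1 k2] := dKKi r.+1 hr.
  by split => //; apply: cm_inv hK k1 k2.
Qed.

Lemma build_ok rest r w a b c d : Inv r a b c d -> LF w a b c d -> (r < n)%N ->
  path ltn r.+1 rest -> all (fun x => x <= n)%N rest ->
  forall j, (r < j <= n)%N -> all (fun x => x <= j)%N rest ->
  [/\ cm (teval v (buildLambda q r.+1 w rest)) (dE j), cm (teval v (buildLambda q r.+1 w rest)) (dF j),
      cm (teval v (buildLambda q r.+1 w rest)) (dK j) & cm (teval v (buildLambda q r.+1 w rest)) (dKi j)].
Proof.
elim: rest r w a b c d => [|a0 rest IH] r w a b c d HI HL hr hp hall j hj hallj.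
  by rewrite /= (LF_embed _ _ _ _ _ _ HL); exact: final_ok.
move: hp hall hallj => /= /andP [h1 hp] /andP [h2 hall] /andP [h3 hallj].
have HI1 := Inv_delta r a b c d hr HI.
have HL1 := LF_delta r.+1 w a b c d HL.
have hm : (r.+1 + (a0 - r.+2) <= n)%N by lia.
have [a' [b' [c' [d' [HI2 HL2]]]]] := iter_tau_ok _ _ _ _ _ _ _ hm HI1 HL1.
have ea : (r.+1 + (a0 - r.+2) = a0.-1)%N by lia.
rewrite ea in HI2.
have ea0 : a0 = a0.-1.+1 by lia.
have -> : buildLambda q a0 = buildLambda q a0.-1.+1 by rewrite -ea0.
apply: (IH _ _ _ _ _ _ HI2 HL2) => //; first by lia.
  by rewrite -ea0.
lia.
Qed.

Lemma hypD_at r : (r < n)%N ->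
  hypD q (dE r) (dF r) (dK r) (dKi r) (v (r.+1, gE)) (v (r.+1, gF)) (v (r.+1, gK)) (v (r.+1, gKi)).
Proof.
move=> hr.
have hh : (r < r.+1 <= n)%N by rewrite ltnSn hr.
split; first by apply: onesite_v; rewrite hr.
have [? ? ? ?] := cm_diag r _ gE hh. have [? ? ? ?] := cm_diag r _ gF hh.
have [? ? ? ?] := cm_diag r _ gK hh. have [? ? ? ?] := cm_diag r _ gKi hh.
by rewrite /=; repeat split.
Qed.

Lemma iseg_val m r w :
  LF w (isA q (dE r) (dF r) (dK r) (dKi r)) (isB q (dE r) (dF r) (dK r) (dKi r))
       (isC q (dE r) (dF r) (dK r) (dKi r)) (isD (dE r) (dF r) (dK r) (dKi r)) ->
  (r + m < n)%N ->
  teval v (buildLambda q r.+1 w (iota r.+2 m)) = Cas q (dE (r + m).+1) (dF (r + m).+1) (dK (r + m).+1) (dKi (r + m).+1).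
Proof.
elim: m r w => [|m IH] r w HL hm.
  rewrite addn0 in hm *; rewrite /= (LF_embed _ _ _ _ _ _ HL).
  by have [_ _ _ _ ->] := @is_delta K q A hq0 hq2 _ _ _ _ _ _ _ _ (hypD_at r hm).
rewrite /= subnn /= -addSnnS.
apply: IH; last by rewrite addSnnS.
have hr : (r < n)%N by lia.
have HL1 := LF_delta r.+1 w _ _ _ _ HL.
have [e1 e2 e3 e4 _] := @is_delta K q A hq0 hq2 _ _ _ _ _ _ _ _ (hypD_at r hr).
by rewrite /= e1 e2 e3 e4 in HL1.
Qed.

Lemma comm_Cas X j : [/\ cm X (dE j), cm X (dF j), cm X (dK j) & cm X (dKi j)] ->
  X * Cas q (dE j) (dF j) (dK j) (dKi j) = Cas q (dE j) (dF j) (dK j) (dKi j) * X.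
Proof.
move=> [h1 h2 h3 h4]; rewrite /Cas.
have : cm X (((q - q^-1) ^+ 2)%:A * dE j * dF j + (q^-1)%:A * dK j + q%:A * dKi j).
  by cm_solve.
by [].
Qed.

Lemma LF_init : LF (iG K iL) 0 0 0 1.
Proof. by move=> y /=; rewrite !mul0r !add0r mul1r. Qed.

Lemma LF_init_is : LF (iG K iL) (isA q (dE 0) (dF 0) (dK 0) (dKi 0)) (isB q (dE 0) (dF 0) (dK 0) (dKi 0))
       (isC q (dE 0) (dF 0) (dK 0) (dKi 0)) (isD (dE 0) (dF 0) (dK 0) (dKi 0)).
Proof.
move=> y; rewrite /isA /isB /isC /isD /=.
nc_solve K A [:: y iEKi; y iF; y iKi; y iL] (@nil (rule K)) 0%N.
all: try exact I.
nc_compute. all: field; rewrite ?hq0 ?hq2 //.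
Qed.

Lemma Inv_init r : Inv r 0 0 0 1.
Proof.
split.
  by move=> i g _; split; [apply: cm0|apply: cm0|apply: cm0|apply: cm1].
rewrite /conds.
split; split; rewrite ?mul0r ?mulr0 ?scaler0 ?mul1r ?mulr1 ?subr0 ?addr0 ?sub0r ?add0r ?scaler0 ?oppr0 //.
Qed.

Lemma iseg_eval j : (1 <= j <= n)%N ->
  teval v (LambdaA q (iseg 1 j)) = Cas q (dE j) (dF j) (dK j) (dKi j).
Proof.
case: j => [|j] // /andP [_ hj].
rewrite /iseg subSS subn0 /=.
have hj' : (0 + j < n)%N by rewrite add0n.
have := iseg_val j 0 (iG K iL) LF_init_is hj'.
by rewrite add0n.
Qed.

Lemma path_odd s m : path ltn (2 * s).+1 [seq (2 * i).+1 | i <- iota s.+1 m].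
Proof.
elim: m s => [|m IH] s //=.
rewrite IH andbT; lia.
Qed.
Lemma path_even s m : path ltn (2 * s).+2 [seq (2 * i).+2 | i <- iota s.+1 m].
Proof.
elim: m s => [|m IH] s //=.
rewrite IH andbT; lia.
Qed.

Lemma odd_comm k j : (1 <= k)%N -> (2 * k - 1 <= j <= n)%N ->
  teval v (LambdaA q (odds_upto k)) * Cas q (dE j) (dF j) (dK j) (dKi j)
  = Cas q (dE j) (dF j) (dK j) (dKi j) * teval v (LambdaA q (odds_upto k)).
Proof.
case: k => [|k] // _ hj.
apply: comm_Cas.
rewrite /odds_upto /=.
apply: (build_ok _ 0 _ 0 0 0 1 (Inv_init 0) LF_init).
- by move: hj; lia.
- exact: (path_odd 0 k).
- apply/allP => x /mapP [i]; rewrite mem_iota => hi ->; move: hi hj; lia.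
- by move: hj; lia.
- apply/allP => x /mapP [i]; rewrite mem_iota => hi ->; move: hi hj; lia.
Qed.

Lemma even_comm k j : (1 <= k)%N -> (2 * k <= j <= n)%N ->
  teval v (LambdaA q (evens_upto k)) * Cas q (dE j) (dF j) (dK j) (dKi j)
  = Cas q (dE j) (dF j) (dK j) (dKi j) * teval v (LambdaA q (evens_upto k)).
Proof.
case: k => [|k] // _ hj.
apply: comm_Cas.
rewrite /evens_upto /=.
apply: (build_ok _ 1 _ 0 0 0 1 (Inv_init 1) LF_init).
- by move: hj; lia.
- exact: (path_even 0 k).
- apply/allP => x /mapP [i]; rewrite mem_iota => hi ->; move: hi hj; lia.
- by move: hj; lia.
- apply/allP => x /mapP [i]; rewrite mem_iota => hi ->; move: hi hj; lia.
Qed.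
End Glue.

Theorem lemma5p1 (K : fieldType) (q : K)
  (hq0 : q != 0) (hq : forall m : nat, (0 < m)%N -> q ^+ m != 1)
  (k n : nat) (hk : (1 <= k)%N) (hn : (2 * k + 1 <= n)%N) :
  let L := LambdaA q in
  let comm X Y := Ueq q n (tmul X Y) (tmul Y X) in
  [/\ comm (L (odds_upto k)) (L (iseg 1 (2 * k))%N),
      comm (L (odds_upto k)) (L (iseg 1 (2 * k - 1))%N),
      comm (L (evens_upto k)) (L (iseg 1 (2 * k))%N) &
      comm (L (evens_upto k)) (L (iseg 1 (2 * k + 1))%N)].
Proof.
have hq2 : q * q - 1 != 0 by rewrite subr_eq0 -expr2 hq.
move=> L comm; rewrite /comm /L /Ueq /=.
split => A v hrel /=.
- rewrite (iseg_eval K q A n v hq0 hq2 hrel); last by lia.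
  apply: (odd_comm K q A n v hq0 hq2 hrel) => //; lia.
- rewrite (iseg_eval K q A n v hq0 hq2 hrel); last by lia.
  apply: (odd_comm K q A n v hq0 hq2 hrel) => //; lia.
- rewrite (iseg_eval K q A n v hq0 hq2 hrel); last by lia.
  apply: (even_comm K q A n v hq0 hq2 hrel) => //; lia.
- rewrite (iseg_eval K q A n v hq0 hq2 hrel); last by lia.
  apply: (even_comm K q A n v hq0 hq2 hrel) => //; lia.
Qed.
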